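(* Let $d\ge1$, $n\in\mathbb{N}$, and fix $s_1\ge0$, $s_2\le0$, $\alpha>0$, $\beta>0$. Let $g\in L^2(\mathbb{T}^d;\mathbb{C})$ with coefficients $\widehat{\mathbf G}=(\hat g_k)_{k\ne0}$ and $g_n\in\mathcal{T}_n$ with coefficients $\widehat{\mathbf G}_n=(\hat g_{n,k})_{k\ne0}$ (zero for $k\notin\mathbb{Z}^d_n$). For $k\ne0$ let $D_k=\alpha\beta|k|^{2(s_2-s_1)}+\alpha+\beta|k|^{2s_2}$ and define $$\mathbf u=\Big(\frac{\alpha\beta|k|^{2(s_2-s_1)}\hat g_k}{D_k}\Big)_{k\ne0},\quad \mathbf v=\Big(\frac{\alpha\hat g_k}{D_k}\Big)_{k\ne0},$$ and $\mathbf u_n,\mathbf v_n$ by the same formulas with $\hat g_{n,k}$ in place of $\hat g_k$ for $k\in\mathbb{Z}^d_n\setminus\{0\}$ and zero for $k\notin\mathbb{Z}^d_n$. (So $(\mathbf u,\mathbf v)$ is the coefficient pair of the minimizer of $I(u,v)=\frac12\|(-\Delta)^{s_1/2}u\|^2+\frac\alpha2\|u+v-g\|^2+\frac\beta2\|R_{s_2/2}(v)\|^2$, and $(\mathbf u_n,\mathbf v_n)$ that of the minimizer of the same functional over $\mathcal{T}_n$ with data $g_n$.) Then $$|\mathbf u-\mathbf u_n|^2_{s_1}+\beta|\mathbf v_n-\mathbf v|^2_{s_2}+\frac\alpha2\|\mathbf u_n+\mathbf v_n-\mathbf u-\mathbf v\|^2_{\ell^2}\le\frac\alpha2\|\widehat{\mathbf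 G}-\widehat{\mathbf G}_n\|^2_{\ell^2}.$$
   Context: $\mathbb{T}^d=\mathbb{R}^d/(2\pi\mathbb{Z})^d$; $\hat u_k=\int_{\mathbb{T}^d}u\,e^{-ik\cdot x}dx$. $\mathbb{Z}^d_n=\{k\in\mathbb{Z}^d:-n/2\le k_i\le n/2-1\ \forall i\}$ and $\mathcal{T}_n$ is the space of trigonometric polynomials $\sum_{k\in\mathbb{Z}^d_n}c_ke^{ik\cdot x}$. $(-\Delta)^\sigma u=(2\pi)^{-d}\sum_k|k|^{2\sigma}\hat u_ke^{ik\cdot x}$, and for $\sigma\le0$, $R_\sigma(u)=(2\pi)^{-d}\sum_{k\ne0}|k|^{2\sigma}\hat u_ke^{ik\cdot x}$. For a sequence $\mathbf w=(w_k)_{k\ne0}$ and $\sigma\in\mathbb{R}$, $|\mathbf w|_\sigma=\big(\sum_{k\ne0}|k|^{2\sigma}|w_k|^2\big)^{1/2}$. *)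

(* Defs.v *)
From HB Require Import structures.
From mathcomp Require Import all_boot all_order all_algebra.
From mathcomp Require Import all_classical all_reals all_analysis.
From mathcomp Require Import complex.
Set Implicit Arguments. Unset Strict Implicit. Unset Printing Implicit Defensive.
Import Order.TTheory GRing.Theory Num.Theory.
Local Open Scope ring_scope.
Local Open Scope classical_set_scope.
Local Open Scope complex_scope.
Local Open Scope ring_scope.

(* Lattice frequencies k in Z^d are row vectors 'rV[int]_d.
   Coefficient sequences are functions 'rV[int]_d -> R[i] (complex numbers
   over the reals R); only the values at k <> 0 are ever used. *)

Section Defs.
Variable R : realType.
Variable d : nat.

Definition knorm2 (k : 'rV[int]_d) : R := \sum_(i < d) ((k ord0 i)%:~R) ^+ 2.

Definition kpow (sigma : R) (k : 'rV[int]_d) : R := knorm2 k `^ sigma.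

Definition cabs2 (z : R[i]) : R := (@complex.Re R z) ^+ 2 + (@complex.Im R z) ^+ 2.

Definition snorm2 (sigma : R) (w : 'rV[int]_d -> R[i]) : \bar R :=
  \esum_(k in [set k : 'rV[int]_d | k != 0]) (kpow sigma k * cabs2 (w k))%:E.

(* k \in Z^d_n :  -n/2 <= k_i <= n/2 - 1 for all i *)
Definition inZdn (n : nat) (k : 'rV[int]_d) : bool :=
  [forall i : 'I_d, (- (n%:Z) <= 2 * k ord0 i) && (2 * k ord0 i <= n%:Z - 2)].

Definition Dk (s1 s2 alpha beta : R) (k : 'rV[int]_d) : R :=
  alpha * beta * kpow (s2 - s1) k + alpha + beta * kpow s2 k.

Definition ucoef (s1 s2 alpha beta : R) (G : 'rV[int]_d -> R[i]) (k : 'rV[int]_d) : R[i] :=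
  ((alpha * beta * kpow (s2 - s1) k) / Dk s1 s2 alpha beta k)%:C * G k.

Definition vcoef (s1 s2 alpha beta : R) (G : 'rV[int]_d -> R[i]) (k : 'rV[int]_d) : R[i] :=
  (alpha / Dk s1 s2 alpha beta k)%:C * G k.

Definition ucoef_n (n : nat) (s1 s2 alpha beta : R) (Gn : 'rV[int]_d -> R[i]) (k : 'rV[int]_d) : R[i] :=
  if inZdn n k then ucoef s1 s2 alpha beta Gn k else 0.

Definition vcoef_n (n : nat) (s1 s2 alpha beta : R) (Gn : 'rV[int]_d -> R[i]) (k : 'rV[int]_d) : R[i] :=
  if inZdn n k then vcoef s1 s2 alpha beta Gn k else 0.

End Defs.

(* Main.v *)
Require Import Defs.
From HB Require Import structures.
From mathcomp Require Import all_boot all_order all_algebra.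
From mathcomp Require Import all_classical all_reals all_analysis.
From mathcomp Require Import complex ring lra.
Import Order.TTheory GRing.Theory Num.Theory.
Local Open Scope ring_scope.
Local Open Scope classical_set_scope.

Lemma esumZ (R : realType) (T : choiceType) (I : set T) (a : T -> \bar R) (r : R) :
  0 < r -> (forall i, (0 <= a i)%E) ->
  (r%:E * (\esum_(i in I) a i) = \esum_(i in I) (r%:E * a i))%E.
Proof.
move=> r0 a0; rewrite /esum -ereal_sup_pZl //; congr ereal_sup.
rewrite image_comp; apply: eq_imagel => A [finA subA] /=.
by rewrite !fsbig_finite // ge0_sume_distrr.
Qed.

Lemma cabs2_sc (R : realType) (r : R) (z : R[i]) :
  cabs2 ((r%:C)%C * z) = r ^+ 2 * cabs2 z.
Proof. case: z => x y; rewrite /cabs2 /=. ring. Qed.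

Lemma knorm2_gt0 (R : realType) d (k : 'rV[int]_d) : k != 0 -> 0 < knorm2 R k.
Proof.
move=> k0.
have [j kj] : exists j, k ord0 j != 0.
  apply/existsP; apply: contraR k0 => /existsPn H; apply/eqP/rowP => j.
  by rewrite mxE; move: (H j); rewrite negbK => /eqP; rewrite (ord1 ord0).
rewrite /knorm2 (bigD1 j) //=.
apply: (@lt_le_trans _ _ (((k ord0 j)%:~R : R) ^+ 2)).
  by rewrite lt0r sqr_ge0 andbT sqrf_eq0 intr_eq0.
by rewrite lerDl; apply: sumr_ge0 => i _; apply: sqr_ge0.
Qed.

Lemma cx1 (R : realType) (P : R) (z w : R[i]) :
  (P%:C * z - P%:C * w = P%:C * (z - w))%C.
Proof. by rewrite mulrBr. Qed.

Lemma cx2 (R : realType) (Q : R) (z w : R[i]) :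
  (Q%:C * w - Q%:C * z = (-Q)%:C * (z - w))%C.
Proof.
case: z => z1 z2; case: w => w1 w2; apply/eqP; rewrite eq_complex /=.
by apply/andP; split; apply/eqP; ring.
Qed.

Lemma cx3 (R : realType) (P Q : R) (z w : R[i]) :
  (P%:C * w + Q%:C * w - P%:C * z - Q%:C * z = (-(P+Q))%:C * (z - w))%C.
Proof.
case: z => z1 z2; case: w => w1 w2; apply/eqP; rewrite eq_complex /=.
by apply/andP; split; apply/eqP; ring.
Qed.

Lemma keyineq (R : realType) (a b c al be E : R) : 0 < a -> 0 <= b -> c = b / a ->
  0 < al -> 0 < be -> 0 <= E ->
  a * ((al * be * c / (al * be * c + al + be * b)) ^+ 2 * E)
  + be * (b * ((- (al / (al * be * c + al + be * b))) ^+ 2 * E))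
  + al / 2 * (1 * ((- (al * be * c / (al * be * c + al + be * b) + al / (al * be * c + al + be * b))) ^+ 2 * E))
  <= al / 2 * (1 * E).
Proof.
move=> a0 b0 -> al0 be0 E0.
set D := al * be * (b / a) + al + be * b.
have D0 : 0 < D.
  rewrite /D; have : 0 <= al * be * (b / a) by apply: mulr_ge0; [apply: mulr_ge0; lra|apply: divr_ge0; lra].
  have : 0 <= be * b by apply: mulr_ge0; lra.
  lra.
have -> : a * ((al * be * (b / a) / D) ^+ 2 * E) + be * (b * ((- (al / D)) ^+ 2 * E)) +
  al / 2 * (1 * ((- (al * be * (b / a) / D + al / D)) ^+ 2 * E))
  = al / 2 * (1 * E) - al / 2 * ((be * b / D) ^+ 2 * E).
  rewrite /D; field; apply/andP; split; rewrite ?lt0r_neq0 //.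
  have h1 : 0 <= al * be * b by apply: mulr_ge0; [apply: mulr_ge0; lra|lra].
  have h2 : 0 < al * a by apply: mulr_gt0.
  have h3 : 0 <= be * b * a by apply: mulr_ge0; [apply: mulr_ge0; lra|lra].
  lra.
have : 0 <= al / 2 * ((be * b / D) ^+ 2 * E).
  by apply: mulr_ge0; [lra| apply: mulr_ge0; [apply: sqr_ge0|]].
lra.
Qed.

Theorem lemma8 (R : realType) (d n : nat) (hd : (1 <= d)%N)
  (s1 s2 alpha beta : R)
  (hs1 : 0 <= s1) (hs2 : s2 <= 0) (halpha : 0 < alpha) (hbeta : 0 < beta)
  (G Gn : 'rV[int]_d -> R[i])
  (hG : (snorm2 0 G < +oo)%E)
  (hGn : forall k : 'rV[int]_d, ~~ inZdn n k -> Gn k = 0) :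
  let u := ucoef s1 s2 alpha beta G in
  let v := vcoef s1 s2 alpha beta G in
  let un := ucoef_n n s1 s2 alpha beta Gn in
  let vn := vcoef_n n s1 s2 alpha beta Gn in
  (snorm2 s1 (fun k => (u k - un k)%R)
   + beta%:E * snorm2 s2 (fun k => (vn k - v k)%R)
   + (alpha / 2)%:E * snorm2 0 (fun k => (un k + vn k - u k - v k)%R)
   <= (alpha / 2)%:E * snorm2 0 (fun k => (G k - Gn k)%R))%E.
Proof.
cbv zeta.
have ha2 : 0 < alpha / 2 by lra.
have nn : forall (s : R) (w : R[i]) (k : 'rV[int]_d), (0 <= (kpow s k * cabs2 w)%:E)%E.
  move=> s w k; rewrite lee_fin; apply: mulr_ge0; first exact: powR_ge0.
  by rewrite /cabs2; apply: addr_ge0; apply: sqr_ge0.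
rewrite /snorm2 (esumZ _ _ _ _ _ hbeta (fun k => nn _ _ k)) !(esumZ _ _ _ _ _ ha2 (fun k => nn _ _ k)).
have sc : forall (c : R) (s : R) (w : R[i]) (k : 'rV[int]_d), 0 < c -> (0 <= c%:E * (kpow s k * cabs2 w)%:E)%E.
  by move=> c s w k c0; apply: mule_ge0 => //; rewrite lee_fin; apply: ltW.
rewrite -esumD; [|by move=> *; exact: nn|by move=> *; apply: sc].
rewrite -esumD; [|by move=> *; apply: adde_ge0; [exact: nn|apply: sc]|by move=> *; apply: sc].
apply: le_esum => k /= k0.
have un_eq : ucoef_n n s1 s2 alpha beta Gn k = ucoef s1 s2 alpha beta Gn k.
  by rewrite /ucoef_n; case: ifP => // /negbT /hGn; rewrite /ucoef => ->; rewrite mulr0.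
have vn_eq : vcoef_n n s1 s2 alpha beta Gn k = vcoef s1 s2 alpha beta Gn k.
  by rewrite /vcoef_n; case: ifP => // /negbT /hGn; rewrite /vcoef => ->; rewrite mulr0.
rewrite un_eq vn_eq /ucoef /vcoef cx1 cx2 cx3 !cabs2_sc.
rewrite -!EFinM -!EFinD lee_fin /kpow powRr0 /Dk /kpow.
have x0 := @knorm2_gt0 R d k k0.
apply: keyineq.
- exact: powR_gt0.
- exact: powR_ge0.
- by rewrite powRB //; apply/implyP => _; rewrite gt_eqF.
- exact: halpha.
- exact: hbeta.
- by rewrite /cabs2; apply: addr_ge0; apply: sqr_ge0.
Qed.
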